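(* Suppose $\alpha$ is such that (H1) holds. Then there exists $z_{\min}$ in the interior of $I$ such that $\alpha'(z)<0$ on $[a,z_{\min})$, $\alpha'(z_{\min})=0$ and $\alpha'(z)>0$ on $(z_{\min},b]$; moreover, for every $z_2\in[a,b]$, $\partial_{z_1}\lambda(z,z_2)<0$ for $z\in[a,z_{\min})$, $\partial_{z_1}\lambda(z_{\min},z_2)=0$, and $\partial_{z_1}\lambda(z,z_2)>0$ for $z\in(z_{\min},b]$.
   Context: Let $D\subset\mathbb R^N$ be a bounded smooth domain, outward normal $\nu$; $I=(a,b)$; $m\in C^\beta(\bar D)$ positive nonconstant; $\alpha:\bar I\to(0,\infty)$ smooth. For $\alpha_1,\alpha_2>0$ let $\Theta_{\alpha_2}$ be the unique positive solution of $\alpha_2\Delta\Theta+(m-\Theta)\Theta=0$ in $D$, $\partial_\nu\Theta=0$, and $\Lambda(\alpha_1,\alpha_2)$ the smallest eigenvalue of $\alpha_1\Delta\Phi+(m-\Theta_{\alpha_2})\Phi+\Lambda\Phi=0$ in $D$, $\partial_\nu\Phi=0$; it is known that $\Lambda$ is smooth on $(0,\infty)^2$ and $\partial_{\alpha_1}\Lambda>0$. Set $\lambda(z_1,z_2)=\Lambda(\alpha(z_1),\alpha(z_2))$. (H1): there is $K_\lambda>0$ with $2K_\lambda\le\partial^2_{z_1}\lambda(z_1,z_2)\le2/K_\lambda$ on $I\times I$, and $\partial_{z_1}\lambda(a,a)<0$, $\partial_{z_1}\lambda(b,b)>0$. *)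

(* Defs.v *)
From Stdlib Require Import Reals List.
From Coquelicot Require Import Coquelicot.
Open Scope R_scope.

Definition smooth_on (U : R -> Prop) (f : R -> R) : Prop :=
  forall (n : nat) (x : R), U x -> ex_derive (Derive_n f n) x.

Definition pd1 (f : R -> R -> R) : R -> R -> R :=
  fun x y => Derive (fun t => f t y) x.
Definition pd2 (f : R -> R -> R) : R -> R -> R :=
  fun x y => Derive (fun t => f x t) y.

(* Iterated mixed partial derivative: [true] = d/dx, [false] = d/dy,
   applied from the right end of the list first. *)
Fixpoint pdl (l : list bool) (f : R -> R -> R) : R -> R -> R :=
  match l with
  | nil => f
  | cons true l' => pd1 (pdl l' f)
  | cons false l' => pd2 (pdl l' f)
  end.

Definition smooth2_on (U : R -> R -> Prop) (f : R -> R -> R) : Prop :=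
  forall (l : list bool) (x y : R), U x y ->
    ex_derive (fun t => pdl l f t y) x /\
    ex_derive (fun t => pdl l f x t) y /\
    continuity_2d_pt (pdl l f) x y.

Definition lam (Lam : R -> R -> R) (alpha : R -> R) (z1 z2 : R) : R :=
  Lam (alpha z1) (alpha z2).
Definition d1lam (Lam : R -> R -> R) (alpha : R -> R) (z1 z2 : R) : R :=
  Derive (fun w => lam Lam alpha w z2) z1.
Definition d11lam (Lam : R -> R -> R) (alpha : R -> R) (z1 z2 : R) : R :=
  Derive (fun w => d1lam Lam alpha w z2) z1.

(* Main.v *)
Require Import Defs.
From Stdlib Require Import Reals List Lra Psatz.
From Coquelicot Require Import Coquelicot.
Open Scope R_scope.

Theorem lemma6p1
  (a b : R) (alpha : R -> R) (Lam : R -> R -> R)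
  (Hab : a < b)
  (Halpha_smooth : exists eps : R, 0 < eps /\
      smooth_on (fun z => a - eps < z < b + eps) alpha)
  (Halpha_pos : forall z, a <= z <= b -> 0 < alpha z)
  (HLam_smooth : smooth2_on (fun x y => 0 < x /\ 0 < y) Lam)
  (HLam_incr : forall x y, 0 < x -> 0 < y -> 0 < pd1 Lam x y)
  (H1 : exists K : R, 0 < K /\
      (forall z1 z2, a < z1 < b -> a < z2 < b ->
         2 * K <= d11lam Lam alpha z1 z2 <= 2 / K) /\
      d1lam Lam alpha a a < 0 /\ 0 < d1lam Lam alpha b b) :
  exists zmin : R, a < zmin < b /\
    (forall z, a <= z < zmin -> Derive alpha z < 0) /\
    Derive alpha zmin = 0 /\
    (forall z, zmin < z <= b -> 0 < Derive alpha z) /\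
    (forall z2, a <= z2 <= b ->
       (forall z, a <= z < zmin -> d1lam Lam alpha z z2 < 0) /\
       d1lam Lam alpha zmin z2 = 0 /\
       (forall z, zmin < z <= b -> 0 < d1lam Lam alpha z z2)).
Proof.
destruct Halpha_smooth as [eps [Heps Hsm]].
destruct H1 as [K [HK [HK2 [Ha Hb]]]].
assert (Hda : forall z, a <= z <= b -> ex_derive alpha z).
{ intros z Hz. exact (Hsm 0%nat z ltac:(lra)). }
assert (Hdda : forall z, a <= z <= b -> ex_derive (Derive alpha) z).
{ intros z Hz. exact (Hsm 1%nat z ltac:(lra)). }
assert (HL0 : forall x y, 0 < x -> 0 < y -> ex_derive (fun t => Lam t y) x).
{ intros x y Hx Hy. exact (proj1 (HLam_smooth nil x y (conj Hx Hy))). }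
assert (HL1 : forall x y, 0 < x -> 0 < y -> ex_derive (fun t => pd1 Lam t y) x).
{ intros x y Hx Hy. exact (proj1 (HLam_smooth (true::nil) x y (conj Hx Hy))). }
assert (Hchain : forall z z2, a <= z <= b -> a <= z2 <= b ->
  d1lam Lam alpha z z2 = Derive alpha z * pd1 Lam (alpha z) (alpha z2)).
{ intros z z2 Hz Hz2. unfold d1lam, lam. apply is_derive_unique.
  apply (is_derive_comp (fun t => Lam t (alpha z2)) alpha z).
  - apply Derive_correct. apply HL0; apply Halpha_pos; lra.
  - apply Derive_correct. apply Hda; lra. }
set (m := (a + b) / 2).
assert (Hm : a <= m <= b) by (unfold m; lra).
set (h := fun z => Derive alpha z * pd1 Lam (alpha z) (alpha m)).
assert (Hhc : forall z, a <= z <= b -> continuity_pt h z).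
{ intros z Hz. unfold h. apply continuity_pt_mult.
  - assert (Hc := ex_derive_continuous _ _ (Hdda z Hz)).
    apply continuity_pt_filterlim; exact Hc.
  - assert (Hc := continuous_comp alpha (fun t => pd1 Lam t (alpha m)) z
      (ex_derive_continuous _ _ (Hda z Hz))
      (ex_derive_continuous _ _ (HL1 (alpha z) (alpha m) (Halpha_pos z Hz) (Halpha_pos m Hm)))).
    apply continuity_pt_filterlim; exact Hc. }
assert (Hhd : forall z, a < z < b -> is_derive h z (d11lam Lam alpha z m)).
{ intros z Hz.
  assert (Hex : ex_derive h z).
  { unfold h. eapply ex_derive_mult.
    - apply Hdda; lra.
    - eexists. apply (is_derive_comp (fun t => pd1 Lam t (alpha m)) alpha z).
      + apply Derive_correct. apply HL1; apply Halpha_pos; lra.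
      + apply Derive_correct. apply Hda; lra. }
  assert (Hloc : locally z (fun t => h t = d1lam Lam alpha t m)).
  { assert (Hr : 0 < Rmin (z - a) (b - z)) by (apply Rmin_pos; lra).
    exists (mkposreal _ Hr). intros t Ht.
    unfold ball in Ht; simpl in Ht; unfold AbsRing_ball, abs, minus, plus, opp in Ht; simpl in Ht.
    apply Rabs_lt_between in Ht.
    assert (Rmin (z - a) (b - z) <= z - a) by apply Rmin_l.
    assert (Rmin (z - a) (b - z) <= b - z) by apply Rmin_r.
    unfold h. rewrite Hchain; [reflexivity|lra|lra]. }
  assert (Hd := Derive_correct _ _ Hex).
  assert (Hd2 := is_derive_ext_loc _ _ _ _ Hloc Hd).
  replace (d11lam Lam alpha z m) with (Derive h z); [exact Hd|].
  symmetry. unfold d11lam. apply is_derive_unique. exact Hd2. }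
assert (Hmono : forall x y, a <= x -> x < y -> y <= b -> h x < h y).
{ intros x y Hx Hxy Hy.
  destruct (MVT_gen h x y (fun c => Rmax (2 * K) (d11lam Lam alpha c m))) as [c [Hc Heq]].
  - intros c Hc. rewrite Rmin_left in Hc by lra. rewrite Rmax_right in Hc by lra.
    rewrite Rmax_right. apply Hhd; lra.
    apply (HK2 c m ltac:(lra) ltac:(unfold m; lra)).
  - intros c Hc. rewrite Rmin_left in Hc by lra. rewrite Rmax_right in Hc by lra.
    apply Hhc; lra.
  - assert (2 * K <= Rmax (2 * K) (d11lam Lam alpha c m)) by apply Rmax_l.
    nra. }
assert (Pos : forall z z2, a <= z <= b -> a <= z2 <= b -> 0 < pd1 Lam (alpha z) (alpha z2)).
{ intros z z2 Hz Hz2. apply HLam_incr; apply Halpha_pos; lra. }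
assert (Hha : h a < 0).
{ rewrite (Hchain a a ltac:(lra) ltac:(lra)) in Ha.
  assert (P1 := Pos a a ltac:(lra) ltac:(lra)).
  assert (P2 := Pos a m ltac:(lra) Hm).
  assert (Derive alpha a < 0) by nra. unfold h. nra. }
assert (Hhb : 0 < h b).
{ rewrite (Hchain b b ltac:(lra) ltac:(lra)) in Hb.
  assert (P1 := Pos b b ltac:(lra) ltac:(lra)).
  assert (P2 := Pos b m ltac:(lra) Hm).
  assert (0 < Derive alpha b) by nra. unfold h. nra. }
destruct (Ranalysis5.IVT_interv h a b Hhc Hab Hha Hhb) as [zm [Hzm Hh0]].
assert (Hzm' : a < zm < b).
{ split.
  - destruct (Rle_lt_or_eq_dec _ _ (proj1 Hzm)) as [H|H]; [exact H|]. subst zm; lra.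
  - destruct (Rle_lt_or_eq_dec _ _ (proj2 Hzm)) as [H|H]; [exact H|]. subst zm; lra. }
assert (Sneg : forall z, a <= z < zm -> Derive alpha z < 0).
{ intros z Hz. assert (h z < h zm) by (apply Hmono; lra).
  assert (P2 := Pos z m ltac:(lra) Hm). unfold h in *. nra. }
assert (Spos : forall z, zm < z <= b -> 0 < Derive alpha z).
{ intros z Hz. assert (h zm < h z) by (apply Hmono; lra).
  assert (P2 := Pos z m ltac:(lra) Hm). unfold h in *. nra. }
assert (S0 : Derive alpha zm = 0).
{ assert (P2 := Pos zm m ltac:(lra) Hm). unfold h in Hh0.
  destruct (Rmult_integral _ _ Hh0) as [H|H]; [exact H|lra]. }
exists zm. split; [exact Hzm'|]. split; [exact Sneg|]. split; [exact S0|].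
split; [exact Spos|].
intros z2 Hz2. split; [|split].
- intros z Hz. rewrite Hchain by lra. assert (Q1 := Sneg z Hz).
  assert (Q2 := Pos z z2 ltac:(lra) Hz2). nra.
- rewrite Hchain by lra. rewrite S0. ring.
- intros z Hz. rewrite Hchain by lra. assert (Q1 := Spos z Hz).
  assert (Q2 := Pos z z2 ltac:(lra) Hz2). nra.
Qed.
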